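(* Let $\mathbf{f} = (f_n)_{n\ge 1}$ be the ordinary paperfolding word over $\{0,1\}$, let $\rho(n)$ be its abelian complexity function, and for $i\ge1$ let $A(i)=\min\{n\in\mathbb{N} : \rho(n)=i+1\}$. Then for all $i\ge 1$, \[ A(i)=\begin{cases}\dfrac{2^i+1}{3} & \text{if } i \text{ is odd},\\[2mm] \dfrac{2^i+2}{3} & \text{if } i \text{ is even}.\end{cases} \]
   Context: The ordinary paperfolding word $\mathbf{f}=(f_n)_{n\ge1}$ over $\{0,1\}$ is defined as follows: for $n\ge 1$ write $n=n'2^k$ with $n'$ odd; then $f_n=0$ if $n'\equiv 1 \pmod 4$ and $f_n=1$ if $n'\equiv 3\pmod 4$. Thus $\mathbf{f}=0010011000110110\cdots$. A factor of $\mathbf{f}$ is a finite contiguous block $f_i f_{i+1}\cdots f_{i+n-1}$. Two words $u,v$ over $\{0,1\}$ are abelian equivalent if one is a rearrangement of the other. For $n\ge1$, the abelian complexity $\rho(n)$ is the number of abelian equivalence classes among the factors of $\mathbf{f}$ of length $n$. Here $\mathbb{N}=\{1,2,3,\dots\}$. *)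

(* Defs.v *)
From mathcomp Require Import all_boot.
From mathcomp Require Import boolp.
Set Implicit Arguments. Unset Strict Implicit. Unset Printing Implicit Defensive.

(* Ordinary paperfolding word, indexed from 1 (value at 0 is irrelevant):
   n = n' 2^k with n' odd; f_n = 0 (false) if n' = 1 mod 4, 1 (true) if n' = 3 mod 4. *)
Definition odd_part (n : nat) : nat := n %/ 2 ^ (logn 2 n).
Definition pf (n : nat) : bool := odd_part n %% 4 == 3.

Definition factor (i n : nat) : n.-tuple bool := [tuple pf (i + j) | j < n].

Definition factors (n : nat) : {set n.-tuple bool} :=
  [set w | `[< exists i, 0 < i /\ w = factor i n >]].

Definition abelian_eq (n : nat) (u v : n.-tuple bool) : bool := perm_eq u v.

Definition rho (n : nat) : nat :=
  #|equivalence_partition (@abelian_eq n) (factors n)|.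

(* Main.v *)
Require Import Defs.
From mathcomp Require Import all_boot.
From mathcomp Require Import zify boolp.
Set Implicit Arguments. Unset Strict Implicit. Unset Printing Implicit Defensive.


Lemma pf_double m : pf (2 * m) = pf m.
Proof.
rewrite /pf /odd_part; case: m => [//|m].
rewrite lognM // logn_prime // eqxx expnD expn1.
by rewrite divnMl.
Qed.

Lemma pf_odd m : pf (2 * m + 1) = odd m.
Proof.
rewrite /pf /odd_part.
have -> : logn 2 (2 * m + 1) = 0.
  have H : ~~ (2 %| 2 * m + 1) by rewrite addn1 dvdn2 /= oddM.
  by rewrite lognE (negbTE H) !andbF.
rewrite expn0 divn1.
case: (boolP (odd m)) => Hm.
  have [q ->] : exists q, m = 2 * q + 1 by exists m./2; rewrite -{1}(odd_double_half m) Hm; lia.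
  apply/eqP; lia.
have [q ->] : exists q, m = 2 * q by exists m./2; rewrite -{1}(odd_double_half m) (negbTE Hm); lia.
apply/negP => /eqP; lia.
Qed.

Fixpoint B j := match j with 0 => 1 | j'.+1 => 2 * B j' - (~~ odd j') end.

Lemma B3 j : 3 * B j = 2 ^ j + (if odd j then 1 else 2).
Proof.
elim: j => [//|j IH] /=; rewrite expnS; case: (odd j) IH => /= IH; lia.
Qed.

Lemma B_pos j : 0 < B j.
Proof. have := B3 j; have := expn_gt0 2 j; case: (odd j); lia. Qed.

Lemma B_incr j : 0 < j -> B j < B j.+1.
Proof.
move=> hj; have := B3 j; have := B3 j.+1; rewrite expnS /=.
have : 2 <= 2 ^ j by rewrite -{1}(expn1 2) leq_exp2l.
case: (odd j) => /=; lia.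
Qed.

Lemma B_S j : B j.+1 = 2 * B j - (~~ odd j).
Proof. by []. Qed.

Lemma a_eq i : (if odd i then (2 ^ i + 1) %/ 3 else (2 ^ i + 2) %/ 3) = B i.
Proof. have := B3 i; case: (odd i) => <-; by rewrite mulKn. Qed.


Definition c x n := \sum_(k < n) (pf (x + k) : nat).
Definition oc q r := \sum_(k < r) (odd (q + k) : nat).

Lemma cS x n : c x n.+1 = c x n + pf (x + n).
Proof. by rewrite /c big_ord_recr. Qed.
Lemma cS' x n : c x n.+1 = pf x + c x.+1 n.
Proof. by rewrite /c big_ord_recl addn0; congr (_ + _); apply: eq_bigr => k _; rewrite addSnnS. Qed.
Lemma ocS q r : oc q r.+1 = oc q r + odd (q + r).
Proof. by rewrite /oc big_ord_recr. Qed.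
Lemma c_le x n : c x n <= n.
Proof. elim: n => [|n IH]; first by rewrite /c big_ord0. rewrite cS; case: pf => /=; lia. Qed.

Lemma oc_even q r : oc q (2 * r) = r.
Proof.
elim: r => [|r IH]; first by rewrite /oc big_ord0.
have -> : 2 * r.+1 = (2 * r).+1.+1 by lia.
rewrite !ocS IH addnS oddS; case: odd => /=; lia.
Qed.

Lemma oc_odd q r : oc q (2 * r + 1) = r + odd q.
Proof. by rewrite addn1 ocS oc_even oddD oddM /=; case: odd => /=; lia. Qed.

Lemma oc_bound q r : r <= 2 * oc q r + 1 /\ 2 * oc q r <= r + 1.
Proof.
have [t [->|->]] : exists t, r = 2 * t \/ r = 2 * t + 1.
  exists r./2; rewrite -{1 3}(odd_double_half r); case: odd; [right|left]; lia.
  by rewrite oc_even; lia.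
by rewrite oc_odd; case: odd => /=; lia.
Qed.

Lemma D1 p h : c (2 * p) (2 * h) = c p h + oc p h.
Proof.
elim: h => [|h IH]; first by rewrite /c /oc !big_ord0.
have -> : 2 * h.+1 = (2 * h).+1.+1 by lia.
rewrite !cS ocS IH -mulnDr pf_double.
have -> : 2 * p + (2 * h).+1 = 2 * (p + h) + 1 by lia.
rewrite pf_odd; lia.
Qed.

Lemma D2 p h : c (2 * p) (2 * h + 1) = c p h.+1 + oc p h.
Proof. by rewrite addn1 !cS D1 -mulnDr pf_double; lia. Qed.

Lemma D3 p h : c (2 * p + 1) (2 * h) = c p.+1 h + oc p h.
Proof.
elim: h => [|h IH]; first by rewrite /c /oc !big_ord0.
have -> : 2 * h.+1 = (2 * h).+1.+1 by lia.
rewrite !cS ocS IH.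
have -> : 2 * p + 1 + 2 * h = 2 * (p + h) + 1 by lia.
rewrite pf_odd.
have -> : 2 * p + 1 + (2 * h).+1 = 2 * (p.+1 + h) by lia.
rewrite pf_double; lia.
Qed.

Lemma D4 p h : c (2 * p + 1) (2 * h + 1) = c p.+1 h + oc p h.+1.
Proof.
rewrite [2 * h + 1]addn1 cS D3 ocS.
have -> : 2 * p + 1 + 2 * h = 2 * (p + h) + 1 by lia.
rewrite pf_odd; lia.
Qed.


Lemma par n : exists t, n = 2 * t \/ n = 2 * t + 1.
Proof. exists n./2; rewrite -{1 3}(odd_double_half n); case: odd; [right|left]; lia. Qed.

Lemma bound n : forall x j, 0 < j -> (j + 2 * c x n <= n \/ n + j <= 2 * c x n) -> B j <= n.
Proof.
elim: n {-2}n (leqnn n) => [|N IHN] n hn x j hj H.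
  have := c_le x n; have := B_pos j; lia.
have Hc := c_le x n.
case: j hj H => [//|j] _ H.
case: (posnP j) => [->|hj]; first by have := c_le x n; rewrite /=; lia.
have IH : forall x' h, h < n -> forall j', 0 < j' -> (j' + 2 * c x' h <= h \/ h + j' <= 2 * c x' h) -> B j' <= h.
  by move=> x' h hh j' hj'; apply: (IHN h); lia.
have n2 : 2 <= n by lia.
have Hj : B j.+1 = 2 * B j - (if odd j then 0 else 1) by rewrite B_S; case: odd.
have [t Ht] : exists t, j = 2 * t + odd j.
  by exists j./2; rewrite -{1}(odd_double_half j); lia.
case: (odd j) Ht Hj => Ht Hj; rewrite ?addn0 ?addn1 in Ht.
all: have [p [Hx|Hx]] := par x; have [h [Hn|Hn]] := par n; subst x n.
- rewrite D1 in H Hc; have Ho := oc_bound p h; have Hl := c_le p h.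
  have : B j <= h by apply: (IH p h _ j hj); lia.
  lia.
- rewrite D2 in H Hc; have Ho := oc_bound p h; have Hl := c_le p h.+1.
  have : B j.+1 <= h.+1 by apply: (IH p h.+1 _ j.+1); lia.
  lia.
- rewrite D3 in H Hc; have Ho := oc_bound p h; have Hl := c_le p.+1 h.
  have : B j <= h by apply: (IH p.+1 h _ j hj); lia.
  lia.
- rewrite D4 in H Hc; have Ho := oc_bound p h.+1; have Hl := c_le p.+1 h.
  have : B j <= h by apply: (IH p.+1 h _ j hj); lia.
  lia.
- rewrite D1 in H Hc; have Ho := oc_bound p h; have Hl := c_le p h.
  have : B j <= h by apply: (IH p h _ j hj); lia.
  lia.
- rewrite D2 in H Hc; have Ho := oc_bound p h; have Hl := c_le p h.+1.
  have : B j <= h.+1 by apply: (IH p h.+1 _ j hj); lia.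
  lia.
- rewrite D3 in H Hc; have Ho := oc_bound p h; have Hl := c_le p.+1 h.
  have : B j <= h by apply: (IH p.+1 h _ j hj); lia.
  lia.
- rewrite D4 in H Hc; have Ho := oc_bound p h.+1; have Hl := c_le p.+1 h.
  have : B j <= h by apply: (IH p.+1 h _ j hj); lia.
  lia.
Qed.


Lemma pow_even i : 0 < i -> odd (2 ^ i) = false.
Proof. by case: i => // i _; rewrite expnS oddM. Qed.

Lemma B_odd i : 0 < i -> odd (B i) = odd i.
Proof.
move=> hi; have := B3 i; have := pow_even hi.
move=> E H; have := congr1 odd H; rewrite oddM /= oddD E.
by case: (odd i).
Qed.

Lemma c1 x : c x 1 = pf x.
Proof. by rewrite /c big_ord1 addn0. Qed.

Lemma Pos i : 0 < i -> 2 * c (2 ^ i) (B i) + i = B i.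
Proof.
elim: i => [//|i IH] _.
case: (posnP i) => [->|hi]; first by rewrite /= c1.
have IH' := IH hi; have Bo := B_odd hi; have Bp := B_pos i.
rewrite B_S expnS.
have pe := pow_even hi.
case: (boolP (odd i)) Bo => oi Bo /=.
- have [t Ht] : exists t, B i = 2 * t + 1.
    by exists (B i)./2; rewrite -{1}(odd_double_half (B i)) Bo; lia.
  rewrite subn0 D1 Ht oc_odd pe; rewrite Ht in IH'; lia.
- have [t Ht] : exists t, B i = 2 * t.+1.
    exists (B i)./2.-1; rewrite -{1}(odd_double_half (B i)) Bo.
    have : (B i)./2 != 0.
      apply/negP => /eqP E; move: Bp; rewrite -(odd_double_half (B i)) Bo E; lia.
    lia.
  have -> : 2 * B i - 1 = 2 * (2 * t + 1) + 1 by lia.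
  rewrite D2 oc_odd pe.
  have -> : (2 * t + 1).+1 = B i by lia.
  lia.
Qed.

Lemma Neg i : 0 < i -> 2 * c (B (i + 3)) (B i) = B i + i.
Proof.
elim: i => [//|i IH] _.
case: (posnP i) => [->|hi]; first by rewrite c1.
have IH' := IH hi; have Bo := B_odd hi; have Bp := B_pos i.
rewrite !addn3 in IH IH' *.
have No := B_odd (ltn0Sn (i.+2)); rewrite !oddS !negbK in No.
have Np := B_pos (i.+3).
rewrite (B_S i) (B_S i.+3) !oddS !negbK.
case: (boolP (odd i)) Bo No => oi Bo No.
- have [t Ht] : exists t, B i = 2 * t + 1.
    by exists (B i)./2; rewrite -{1}(odd_double_half (B i)) Bo; lia.
  have [q [Hq oq]] : exists q, B i.+3 = q.+1 /\ odd q.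
    exists (B i.+3).-1; split; first lia.
    move: No; rewrite -{1}(prednK Np) oddS; by case: (odd _).
  change (nat_of_bool (~~ true)) with 0; change (nat_of_bool true) with 1.
  have -> : 2 * B i.+3 - 1 = 2 * q + 1 by lia.
  rewrite subn0 D3 -Hq Ht oc_odd oq; rewrite Ht in IH'; lia.
- have [t Ht] : exists t, B i = 2 * t.+1.
    exists (B i)./2.-1; rewrite -{1}(odd_double_half (B i)) Bo.
    have : (B i)./2 != 0.
      apply/negP => /eqP E; move: Bp; rewrite -(odd_double_half (B i)) Bo E; lia.
    lia.
  change (nat_of_bool (~~ false)) with 1; change (nat_of_bool false) with 0.
  rewrite subn0.
  have -> : 2 * B i - 1 = 2 * (2 * t + 1) + 1 by lia.
  rewrite D2 oc_odd No.
  have -> : (2 * t + 1).+1 = B i by lia.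
  change (nat_of_bool (~~ false)) with 1; lia.
Qed.




Lemma mem_factors n w : (w \in factors n) <-> exists i, 0 < i /\ w = factor i n.
Proof. by rewrite inE; split => [/asboolP|H]; [|apply/asboolP]. Qed.

Lemma countP (p : pred bool) (s : seq bool) :
  count p s = (if p true then count id s else 0) + (if p false then size s - count id s else 0).
Proof.
case E1: (p true); case E2: (p false); elim: s => [|b s IH] /=; rewrite ?E1 ?E2 //.
all: have := count_size id s; case: b; rewrite /= ?E1 ?E2 IH.
all: rewrite /nat_of_bool; lia. Qed.


Lemma perm_count n (u v : n.-tuple bool) : perm_eq u v = (count id u == count id v).
Proof.
apply/idP/eqP => [/permP H|H]; first by apply: H.
by apply/permP => p; rewrite (countP p u) (countP p v) !size_tuple H.
Qed.

Lemma count_factor x n : count id (factor x n) = c x n.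
Proof.
rewrite /factor /c /= count_map.
rewrite -sum1_count big_mkcond /= -[RHS]big_enum /=.
apply: eq_bigr => k _; by case: pf.
Qed.

Lemma div2_facts x : x = x %/ 2 * 2 + x %% 2 /\ x %% 2 < 2.
Proof. by split; [apply: divn_eq | apply: ltn_pmod]. Qed.

Lemma div2_inj a b lo : lo <= 2 * a -> lo <= 2*b -> (2 * a - lo) %/ 2 = (2 * b - lo) %/ 2 -> a = b.
Proof. move=> h1 h2. have := divn_eq (2*a - lo) 2. have := divn_eq (2*b - lo) 2.
have := ltn_pmod (2*a - lo) (isT : 0 < 2). have := ltn_pmod (2*b - lo) (isT : 0 < 2). lia. Qed.

Lemma div2_lt a lo m : 2 * a <= lo + 2 * m -> (2 * a - lo) %/ 2 < m.+1.
Proof. move=> h1. have := divn_eq (2*a - lo) 2.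
have := ltn_pmod (2*a - lo) (isT : 0 < 2). lia. Qed.

Lemma div2_val t lo : (2 * t + lo - lo) %/ 2 = t.
Proof. by rewrite addnK mulKn. Qed.

Definition psi (n lo m : nat) (w : n.-tuple bool) : 'I_m.+1 := inord ((2 * count id w - lo) %/ 2).

Lemma psi_eq n lo m (Hr : forall w, w \in factors n -> lo <= 2 * count id w <= lo + 2 * m) u v : u \in factors n -> v \in factors n ->
  (psi lo m u == psi lo m v) = (count id u == count id v).
Proof.
move=> /Hr /andP [Hu1 Hu2] /Hr /andP [Hv1 Hv2]; rewrite /psi.
apply/eqP/eqP => [E|->//].
have := congr1 (@nat_of_ord _) E; rewrite !inordK; try exact: div2_lt.
exact: div2_inj.
Qed.

Lemma rho_psi n lo m (Hr : forall w, w \in factors n -> lo <= 2 * count id w <= lo + 2 * m) :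
  rho n = #|psi lo m @: factors n|.
Proof.
rewrite /rho /equivalence_partition.
set F := fun k : 'I_m.+1 => [set y in factors n | psi lo m y == k].
have -> : [set [set y in factors n | abelian_eq x y] | x in factors n] = (F \o psi lo m) @: factors n.
  apply: eq_in_imset => x Dx; apply/setP => y; rewrite !inE /abelian_eq perm_count.
  case: (boolP `[< _ >]) => //= Dy.
  by rewrite eq_sym (psi_eq Hr) // ?inE // eq_sym.
have -> : (F \o psi lo m) @: factors n = F @: (psi lo m @: factors n) by apply: imset_comp.
rewrite card_in_imset // => k1 k2 /imsetP [x1 D1 ->] /imsetP [x2 D2 ->] E.
have : x1 \in F (psi lo m x1) by rewrite /F in_set D1 eqxx.
by rewrite E /F in_set => /andP [_ /eqP].
Qed.




Lemma slide y n : c y.+1 n <= (c y n).+1 /\ c y n <= (c y.+1 n).+1.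
Proof.
have := cS y n; rewrite cS'; case: (pf y); case: (pf (y + n)); rewrite /nat_of_bool; lia.
Qed.

Lemma ivt (f : nat -> nat) x d v :
  (forall y, f y.+1 <= (f y).+1 /\ f y <= (f y.+1).+1) ->
  (f x <= v <= f (x + d)) || (f (x + d) <= v <= f x) ->
  exists y, x <= y /\ f y = v.
Proof.
move=> Hf; elim: d => [|d IH].
  rewrite addn0 => H; exists x; split => //; case/orP: H => /andP [h1 h2]; lia.
move=> H.
have := Hf (x + d); rewrite addnS in H *; move=> [h1 h2].
case/orP: H => /andP [H1 H2].
- case: (leqP v (f (x + d))) => Hv.
    by apply: IH; apply/orP; left; apply/andP; split.
  exists (x + d).+1; split; lia.
- case: (leqP (f (x + d)) v) => Hv.
    by apply: IH; apply/orP; right; apply/andP; split.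
  exists (x + d).+1; split; lia.
Qed.

Lemma ivt2 (f : nat -> nat) x y v :
  (forall y, f y.+1 <= (f y).+1 /\ f y <= (f y.+1).+1) ->
  f x <= v <= f y ->
  exists z, minn x y <= z /\ f z = v.
Proof.
move=> Hf H; case: (leqP x y) => hxy.
  have H' : (f x <= v <= f (x + (y - x))) || (f (x + (y - x)) <= v <= f x).
    by rewrite subnKC // H.
  have [z [h1 h2]] := ivt Hf H'.
  exists z; split => //; lia.
have H' : (f y <= v <= f (y + (x - y))) || (f (y + (x - y)) <= v <= f y).
  by rewrite subnKC ?H ?orbT //; lia.
have [z [h1 h2]] := ivt Hf H'.
exists z; split => //; lia.
Qed.


Theorem proposition3 (i : nat) (hi : 0 < i) :
  let a := if odd i then (2 ^ i + 1) %/ 3 else (2 ^ i + 2) %/ 3 in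
  [/\ 0 < a, rho a = i.+1 & forall n, 0 < n -> rho n = i.+1 -> a <= n].
Proof.
rewrite /= a_eq; split; first exact: B_pos.
- have Hr : forall w, w \in factors (B i) -> B i - i <= 2 * count id w <= B i - i + 2 * i.
    move=> w /mem_factors [x [hx ->]]; rewrite count_factor.
    have Hl := c_le x (B i).
    have : ~ (i.+1 + 2 * c x (B i) <= B i \/ B i + i.+1 <= 2 * c x (B i)).
      move=> /(bound (ltn0Sn i)); have := B_incr hi; lia.
    move=> H; apply/andP; split; lia.
  rewrite (rho_psi Hr).
  have -> : @psi (B i) (B i - i) i @: factors (B i) = [set: 'I_i.+1].
    apply/setP => k; rewrite inE; apply/imsetP.
    have Hp := Pos hi; have Hn := Neg hi.
    have Hk : c (2 ^ i) (B i) <= c (2 ^ i) (B i) + k <= c (B (i + 3)) (B i).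
      by apply/andP; split; have := ltn_ord k; lia.
    have [z [hz Hz]] := ivt2 (fun y => slide y (B i)) Hk.
    exists (factor z (B i)).
      apply/mem_factors; exists z; split => //.
      have := B_pos (i + 3); have := expn_gt0 2 i; lia.
    apply: val_inj; rewrite /= /psi count_factor Hz.
    have -> : 2 * (c (2 ^ i) (B i) + k) - (B i - i) = 2 * k by lia.
    by rewrite mulKn // inordK.
  by rewrite cardsT card_ord.
- move=> n hn Hrho; rewrite leqNgt; apply/negP => hlt.
  have Hr : forall w, w \in factors n -> n.+1 - i <= 2 * count id w <= n.+1 - i + 2 * i.-1.
    move=> w /mem_factors [x [hx ->]]; rewrite count_factor.
    have Hl := c_le x n.
    have : ~ (i + 2 * c x n <= n \/ n + i <= 2 * c x n).
      move=> /(bound hi); lia.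
    move=> H; apply/andP; split; lia.
  have := rho_psi Hr; rewrite Hrho => E.
  have := max_card (mem (@psi n (n.+1 - i) i.-1 @: factors n)).
  rewrite -E card_ord; lia.
Qed.
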